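(* Let $\mathrm{U}(2)\subset\mathrm{SO}(4)\times\{1\}$ act on $\Lambda^2_-S^4$. Every point is mapped into the fiber over some ${}^t(x_1,0,0,0,x_5)$ with $x_1\ge0$. For $p_0$ in the fiber over ${}^t(x_1,0,0,0,x_5)$, the orbit $\mathrm{U}(2)\cdot p_0$ is diffeomorphic to: $\mathrm{U}(2)$ if $x_5\ne\pm1$ and $p_0=({}^t(x_1,0,0,0,x_5),{}^t(a_1,a_2,a_3))$ with $(a_1,a_2)\ne0$; $S^3$ if $x_5\ne\pm1$ and $(a_1,a_2)=0$; $S^2$ if $x_5=1$ and $p_0\ne0$; $S^1$ if $x_5=-1$ and $p_0$ has pole coordinates with $(A_2,A_3)\ne0$; a point if $x_5=1,p_0=0$, or $x_5=-1$ and $(A_2,A_3)=0$.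
   Context: $S^4\subset\mathbb R^5$ is the unit sphere, $\Lambda^2_-S^4$ the bundle of anti-self-dual 2-forms (round metric); $\mathrm{SO}(5)$ acts on $\Lambda^2_-S^4$ by lifting its linear action on $S^4$ to 2-forms ($g\cdot\omega=(g^{-1})^*\omega$). $\mathrm{U}(2)$ acts $\mathbb C$-linearly on $\mathbb C^2\cong\mathbb R^4$ via $(z_1,z_2)=(x_1+ix_2,x_3+ix_4)$ and fixes $x_5$. On $S^4\setminus\{x_5=\pm1\}$ use the frame $e_1=\frac{1}{\sqrt{1-x_5^2}}{}^t(-x_2,x_1,-x_4,x_3,0)$, $e_2=\frac{1}{\sqrt{1-x_5^2}}{}^t(-x_3,x_4,x_1,-x_2,0)$, $e_3=\frac{1}{\sqrt{1-x_5^2}}{}^t(-x_4,-x_3,x_2,x_1,0)$, $e_4=\frac{1}{\sqrt{1-x_5^2}}{}^t(-x_1x_5,-x_2x_5,-x_3x_5,-x_4x_5,1-x_5^2)$, dual coframe $e^i$, $\omega_1=e^{12}-e^{34}$, $\omega_2=e^{13}-e^{42}$, $\omega_3=e^{14}-e^{23}$; $(x,{}^t(a_1,a_2,a_3))$ denotes $\sum_ia_i\omega_i|_x$. At a pole ${}^t(0,0,0,0,\pm1)$ use the basis $f_1={}^t(1,0,0,0,0)$, $f_2={}^t(0,1,0,0,0)$, $f_3={}^t(0,0,1,0,0)$, $f_4={}^t(0,0,0,\pm1,0)$ of the tangent space, dual basis $f^i$, $\Omega_1=f^{12}-f^{34}$, $\Omega_2=f^{13}-f^{42}$, $\Omega_3=f^{14}-f^{23}$,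 and pole coordinates $(A_1,A_2,A_3)$ meaning the point $\sum_iA_i\Omega_i$. *)

(* Defs.v *)
From Stdlib Require Import Reals.
From mathcomp Require Import ssreflect ssrfun ssrbool eqtype ssrnat seq choice fintype bigop.
Set Implicit Arguments. Unset Strict Implicit. Unset Printing Implicit Defensive.
Local Open Scope R_scope.

Definition rsum (I : finType) (F : I -> R) : R := \big[Rplus/0]_(i : I) F i.

Definition rdist (I : finType) (x y : I -> R) : R := rsum (fun i => Rabs (x i - y i)).

Definition is_open (I : finType) (U : (I -> R) -> Prop) : Prop :=
  forall x, U x -> exists eps, 0 < eps /\ forall y, rdist x y < eps -> U y.

Definition cont_on (I : finType) (U : (I -> R) -> Prop) (f : (I -> R) -> R) : Prop :=
  forall x, U x -> forall eps, 0 < eps -> exists delta, 0 < delta /\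
    forall y, U y -> rdist x y < delta -> Rabs (f y - f x) < eps.

Definition shift (I : finType) (x : I -> R) (j : I) (t : R) : I -> R :=
  fun i => if i == j then x i + t else x i.

Fixpoint Ck_on (I : finType) (k : nat) (U : (I -> R) -> Prop) (f : (I -> R) -> R) : Prop :=
  match k with
  | O => cont_on U f
  | S k' => cont_on U f /\
      forall j : I, exists g : (I -> R) -> R,
        (forall x, U x -> derivable_pt_lim (fun t => f (shift x j t)) 0 (g x))
        /\ Ck_on k' U g
  end.

Definition smooth_on (I J : finType) (U : (I -> R) -> Prop) (F : (I -> R) -> (J -> R)) : Prop :=
  forall (k : nat) (j : J), Ck_on k U (fun x => F x j).

Definition smooth_map (I J : finType) (A : (I -> R) -> Prop) (f : (I -> R) -> (J -> R)) : Prop :=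
  forall a, A a -> exists U, is_open U /\ U a /\
    exists F, smooth_on U F /\ forall y, U y -> A y -> F y = f y.

Definition diffeomorphic (I J : finType) (A : (I -> R) -> Prop) (B : (J -> R) -> Prop) : Prop :=
  exists (f : (I -> R) -> (J -> R)) (g : (J -> R) -> (I -> R)),
    (forall a, A a -> B (f a)) /\ (forall b, B b -> A (g b)) /\
    (forall a, A a -> g (f a) = a) /\ (forall b, B b -> f (g b) = b) /\
    smooth_map A f /\ smooth_map B g.

Definition sphere (k : nat) : ('I_k.+1 -> R) -> Prop :=
  fun v => rsum (fun i => v i * v i) = 1.

Arguments sphere : clear implicits.

Definition point_set : ('I_0 -> R) -> Prop := fun _ => True.

(* U(2) realised as 4x4 real matrices: C-linear (commuting with J, the
   multiplication by i for (z1,z2) = (x1+ix2, x3+ix4)) and orthogonal. *)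
Definition Jmat (i j : 'I_4) : R :=
  match nat_of_ord i, nat_of_ord j with
  | 1, 0 => 1 | 0, 1 => -1 | 3, 2 => 1 | 2, 3 => -1 | _, _ => 0 end.

Definition delta (I : finType) (i j : I) : R := if i == j then 1 else 0.

Definition U2 (u : 'I_4 -> 'I_4 -> R) : Prop :=
  (forall i j, rsum (fun k => u k i * u k j) = delta i j) /\
  (forall i j, rsum (fun k => u i k * Jmat k j) = rsum (fun k => Jmat i k * u k j)).

Definition U2_set : ('I_4 * 'I_4 -> R) -> Prop := fun v => U2 (fun i j => v (i, j)).

Definition liftU2 (u : 'I_4 -> 'I_4 -> R) (i j : 'I_5) : R :=
  if (nat_of_ord i < 4)%N && (nat_of_ord j < 4)%N then u (inord i) (inord j)
  else if (nat_of_ord i == 4)%N && (nat_of_ord j == 4)%N then 1 else 0.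

(* A point is (x, M): x in S^4, M the 5x5 antisymmetric matrix of the *)
(* 2-form on T_x S^4, extended by zero along x: omega(u,v) = u^T M v. *)

Definition bpoint := (('I_5 -> R) * ('I_5 -> 'I_5 -> R))%type.

Definition mk5 (a b c d e : R) : 'I_5 -> R :=
  fun i => match nat_of_ord i with 0 => a | 1 => b | 2 => c | 3 => d | _ => e end.

Definition co (x : 'I_5 -> R) (k : nat) : R := x (inord k).

Definition sc (r : R) (v : 'I_5 -> R) : 'I_5 -> R := fun i => r * v i.

(* e^j wedge e^k as a matrix, using e^j(u) = <e_j, u> *)
Definition wedge (u v : 'I_5 -> R) : 'I_5 -> 'I_5 -> R := fun i j => u i * v j - v i * u j.

Definition msub (A B : 'I_5 -> 'I_5 -> R) : 'I_5 -> 'I_5 -> R := fun i j => A i j - B i j.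

Definition nrm (x : 'I_5 -> R) : R := sqrt (1 - co x 4 * co x 4).

Definition fe1 (x : 'I_5 -> R) := sc (/ nrm x) (mk5 (- co x 1) (co x 0) (- co x 3) (co x 2) 0).
Definition fe2 (x : 'I_5 -> R) := sc (/ nrm x) (mk5 (- co x 2) (co x 3) (co x 0) (- co x 1) 0).
Definition fe3 (x : 'I_5 -> R) := sc (/ nrm x) (mk5 (- co x 3) (- co x 2) (co x 1) (co x 0) 0).
Definition fe4 (x : 'I_5 -> R) := sc (/ nrm x)
  (mk5 (- co x 0 * co x 4) (- co x 1 * co x 4) (- co x 2 * co x 4) (- co x 3 * co x 4)
       (1 - co x 4 * co x 4)).

Definition omega1 x := msub (wedge (fe1 x) (fe2 x)) (wedge (fe3 x) (fe4 x)).
Definition omega2 x := msub (wedge (fe1 x) (fe3 x)) (wedge (fe4 x) (fe2 x)).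
Definition omega3 x := msub (wedge (fe1 x) (fe4 x)) (wedge (fe2 x) (fe3 x)).

Definition fiber_form (x : 'I_5 -> R) (a1 a2 a3 : R) : 'I_5 -> 'I_5 -> R :=
  fun i j => a1 * omega1 x i j + a2 * omega2 x i j + a3 * omega3 x i j.

Definition pole (s : R) : 'I_5 -> R := mk5 0 0 0 0 s.
Definition pf1 := mk5 1 0 0 0 0.
Definition pf2 := mk5 0 1 0 0 0.
Definition pf3 := mk5 0 0 1 0 0.
Definition pf4 (s : R) := mk5 0 0 0 s 0.
Definition Omega1 s := msub (wedge pf1 pf2) (wedge pf3 (pf4 s)).
Definition Omega2 s := msub (wedge pf1 pf3) (wedge (pf4 s) pf2).
Definition Omega3 s := msub (wedge pf1 (pf4 s)) (wedge pf2 pf3).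

Definition pole_form (s A1 A2 A3 : R) : 'I_5 -> 'I_5 -> R :=
  fun i j => A1 * Omega1 s i j + A2 * Omega2 s i j + A3 * Omega3 s i j.

Definition on_S4 (x : 'I_5 -> R) : Prop := rsum (fun i => x i * x i) = 1.

Definition in_Lambda2m (p : bpoint) : Prop :=
  on_S4 p.1 /\
  ( (co p.1 4 <> 1 /\ co p.1 4 <> -1 /\ exists a1 a2 a3, p.2 = fiber_form p.1 a1 a2 a3)
  \/ (p.1 = pole 1 /\ exists A1 A2 A3, p.2 = pole_form 1 A1 A2 A3)
  \/ (p.1 = pole (-1) /\ exists A1 A2 A3, p.2 = pole_form (-1) A1 A2 A3)).

(* g . (x, omega) = (g x, (g^{-1})^* omega), i.e. M |-> g M g^T for g orthogonal *)
Definition act (g : 'I_5 -> 'I_5 -> R) (p : bpoint) : bpoint :=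
  (fun i => rsum (fun k => g i k * p.1 k),
   fun i j => rsum (fun k => rsum (fun l => g i k * p.2 k l * g j l))).

Definition emb (p : bpoint) : ('I_5 + 'I_5 * 'I_5)%type -> R :=
  fun s => match s with inl i => p.1 i | inr ij => p.2 ij.1 ij.2 end.

Definition orbit (p0 : bpoint) : (('I_5 + 'I_5 * 'I_5)%type -> R) -> Prop :=
  fun v => exists u, U2 u /\ v = emb (act (liftU2 u) p0).

(* Main.v *)
From HB Require Import structures.
Require Import Defs.
From Stdlib Require Import Reals Lra Lia Psatz FunctionalExtensionality.
From mathcomp Require Import ssreflect ssrfun ssrbool eqtype ssrnat seq choice fintype bigop.
Set Implicit Arguments. Unset Strict Implicit.
Local Open Scope R_scope.

HB.instance Definition Rplus_comlaw :=
  Monoid.isComLaw.Build R 0 Rplus (fun x y z => esym (Rplus_assoc x y z)) Rplus_comm Rplus_0_l.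

Section RS.
Variable I : finType.
Implicit Types F G : I -> R.

Lemma rsum_ext F G : (forall i, F i = G i) -> rsum F = rsum G.
Proof. by move=> H; apply: eq_bigr => i _. Qed.

Lemma rsum_plus F G : rsum (fun i => F i + G i) = rsum F + rsum G.
Proof. rewrite /rsum; elim/big_rec3: _ => [|i x y z _ ->]; ring. Qed.

Lemma rsum_scal c F : rsum (fun i => c * F i) = c * rsum F.
Proof. rewrite /rsum; elim/big_rec2: _ => [|i x y _ ->]; ring. Qed.

Lemma rsum_opp F : rsum (fun i => - F i) = - rsum F.
Proof. rewrite /rsum; elim/big_rec2: _ => [|i x y _ ->]; ring. Qed.

Lemma rsum_minus F G : rsum (fun i => F i - G i) = rsum F - rsum G.
Proof. rewrite /rsum; elim/big_rec3: _ => [|i x y z _ ->]; ring. Qed.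

Lemma rsum_zero : rsum (fun _ : I => 0) = 0.
Proof. rewrite /rsum; elim/big_rec: _ => [|i x _ ->]; ring. Qed.

Lemma rsum_ge0 F : (forall i, 0 <= F i) -> 0 <= rsum F.
Proof. move=> H; rewrite /rsum; elim/big_rec: _ => [|i x _ Hx]; [lra|]. have := H i; lra. Qed.

Lemma rsum_elem F i : (forall k, 0 <= F k) -> F i <= rsum F.
Proof.
move=> H. rewrite /rsum (bigD1 i) //=.
have : 0 <= \big[Rplus/0]_(k | k != i) F k.
  by elim/big_rec: _ => [|k x _ Hx]; [lra|]; have := H k; lra.
lra.
Qed.

Lemma rsum_prod F G : rsum (fun k => rsum (fun l => F k * G l)) = rsum F * rsum G.
Proof.
transitivity (rsum (fun k => rsum G * F k)).
  by apply: rsum_ext => k; rewrite rsum_scal; ring.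
by rewrite rsum_scal; ring.
Qed.
End RS.

Notation o5_0 := (@Ordinal 5 0 isT).
Notation o5_1 := (@Ordinal 5 1 isT).
Notation o5_2 := (@Ordinal 5 2 isT).
Notation o5_3 := (@Ordinal 5 3 isT).
Notation o5_4 := (@Ordinal 5 4 isT).
Notation q0 := (@Ordinal 4 0 isT).
Notation q1 := (@Ordinal 4 1 isT).
Notation q2 := (@Ordinal 4 2 isT).
Notation q3 := (@Ordinal 4 3 isT).
Notation t0 := (@Ordinal 3 0 isT).
Notation t1 := (@Ordinal 3 1 isT).
Notation t2 := (@Ordinal 3 2 isT).
Notation d0 := (@Ordinal 2 0 isT).
Notation d1 := (@Ordinal 2 1 isT).

Lemma rsum5 (F : 'I_5 -> R) : rsum F = F o5_0 + F o5_1 + F o5_2 + F o5_3 + F o5_4.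
Proof.
rewrite /rsum. change (\big[Rplus/0]_(i < 5) F i = F o5_0 + F o5_1 + F o5_2 + F o5_3 + F o5_4).
rewrite !big_ord_recl big_ord0 /= Rplus_0_r !Rplus_assoc.
by repeat f_equal; apply/val_inj.
Qed.
Lemma rsum4 (F : 'I_4 -> R) : rsum F = F q0 + F q1 + F q2 + F q3.
Proof.
rewrite /rsum. change (\big[Rplus/0]_(i < 4) F i = F q0 + F q1 + F q2 + F q3).
rewrite !big_ord_recl big_ord0 /= Rplus_0_r !Rplus_assoc.
by repeat f_equal; apply/val_inj.
Qed.
Lemma rsum3 (F : 'I_3 -> R) : rsum F = F t0 + F t1 + F t2.
Proof.
rewrite /rsum. change (\big[Rplus/0]_(i < 3) F i = F t0 + F t1 + F t2).
rewrite !big_ord_recl big_ord0 /= Rplus_0_r !Rplus_assoc.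
by repeat f_equal; apply/val_inj.
Qed.
Lemma rsum2 (F : 'I_2 -> R) : rsum F = F d0 + F d1.
Proof.
rewrite /rsum. change (\big[Rplus/0]_(i < 2) F i = F d0 + F d1).
rewrite !big_ord_recl big_ord0 /= Rplus_0_r.
by repeat f_equal; apply/val_inj.
Qed.

Lemma ord5_cases (P : 'I_5 -> Prop) : P o5_0 -> P o5_1 -> P o5_2 -> P o5_3 -> P o5_4 -> forall i, P i.
Proof.
move=> H0 H1 H2 H3 H4 [[|[|[|[|[|i]]]]] Hi] //.
- by rewrite (_ : Ordinal Hi = o5_0) //; apply/val_inj.
- by rewrite (_ : Ordinal Hi = o5_1) //; apply/val_inj.
- by rewrite (_ : Ordinal Hi = o5_2) //; apply/val_inj.
- by rewrite (_ : Ordinal Hi = o5_3) //; apply/val_inj.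
- by rewrite (_ : Ordinal Hi = o5_4) //; apply/val_inj.
Qed.
Lemma ord4_cases (P : 'I_4 -> Prop) : P q0 -> P q1 -> P q2 -> P q3 -> forall i, P i.
Proof.
move=> H0 H1 H2 H3 [[|[|[|[|i]]]] Hi] //.
- by rewrite (_ : Ordinal Hi = q0) //; apply/val_inj.
- by rewrite (_ : Ordinal Hi = q1) //; apply/val_inj.
- by rewrite (_ : Ordinal Hi = q2) //; apply/val_inj.
- by rewrite (_ : Ordinal Hi = q3) //; apply/val_inj.
Qed.
Lemma ord3_cases (P : 'I_3 -> Prop) : P t0 -> P t1 -> P t2 -> forall i, P i.
Proof.
move=> H0 H1 H2 [[|[|[|i]]] Hi] //.
- by rewrite (_ : Ordinal Hi = t0) //; apply/val_inj.
- by rewrite (_ : Ordinal Hi = t1) //; apply/val_inj.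
- by rewrite (_ : Ordinal Hi = t2) //; apply/val_inj.
Qed.
Lemma ord2_cases (P : 'I_2 -> Prop) : P d0 -> P d1 -> forall i, P i.
Proof.
move=> H0 H1 [[|[|i]] Hi] //.
- by rewrite (_ : Ordinal Hi = d0) //; apply/val_inj.
- by rewrite (_ : Ordinal Hi = d1) //; apply/val_inj.
Qed.

Lemma inord5_0 : (inord 0 : 'I_5) = o5_0. Proof. by apply/val_inj; rewrite /= inordK. Qed.
Lemma inord5_1 : (inord 1 : 'I_5) = o5_1. Proof. by apply/val_inj; rewrite /= inordK. Qed.
Lemma inord5_2 : (inord 2 : 'I_5) = o5_2. Proof. by apply/val_inj; rewrite /= inordK. Qed.
Lemma inord5_3 : (inord 3 : 'I_5) = o5_3. Proof. by apply/val_inj; rewrite /= inordK. Qed.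
Lemma inord5_4 : (inord 4 : 'I_5) = o5_4. Proof. by apply/val_inj; rewrite /= inordK. Qed.
Lemma inord4_0 : (inord 0 : 'I_4) = q0. Proof. by apply/val_inj; rewrite /= inordK. Qed.
Lemma inord4_1 : (inord 1 : 'I_4) = q1. Proof. by apply/val_inj; rewrite /= inordK. Qed.
Lemma inord4_2 : (inord 2 : 'I_4) = q2. Proof. by apply/val_inj; rewrite /= inordK. Qed.
Lemma inord4_3 : (inord 3 : 'I_4) = q3. Proof. by apply/val_inj; rewrite /= inordK. Qed.
Definition inordE := (inord5_0, inord5_1, inord5_2, inord5_3, inord5_4, inord4_0, inord4_1, inord4_2, inord4_3).

Lemma mat_ext (A B : 'I_5 -> 'I_5 -> R) : (forall i j, A i j = B i j) -> A = B.
Proof. move=> H; apply: functional_extensionality => i; apply: functional_extensionality => j; exact: H. Qed.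
Lemma vec_ext (A B : 'I_5 -> R) : (forall i, A i = B i) -> A = B.
Proof. move=> H; apply: functional_extensionality => i; exact: H. Qed.

Lemma mk5_eta (y : 'I_5 -> R) : y = mk5 (y o5_0) (y o5_1) (y o5_2) (y o5_3) (y o5_4).
Proof. apply: vec_ext; exact: ord5_cases. Qed.

Definition mv (g : 'I_5 -> 'I_5 -> R) (p : 'I_5 -> R) : 'I_5 -> R := fun i => rsum (fun k => g i k * p k).
Definition act2 (g : 'I_5 -> 'I_5 -> R) (M : 'I_5 -> 'I_5 -> R) : 'I_5 -> 'I_5 -> R :=
  fun i j => rsum (fun k => rsum (fun l => g i k * M k l * g j l)).
Definition lin3 (a1 a2 a3 : R) (A B C : 'I_5 -> 'I_5 -> R) : 'I_5 -> 'I_5 -> R :=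
  fun i j => a1 * A i j + a2 * B i j + a3 * C i j.

Lemma act_eq g p : act g p = (mv g p.1, act2 g p.2).
Proof. by []. Qed.

Lemma act2_wedge g p q : act2 g (wedge p q) = wedge (mv g p) (mv g q).
Proof.
apply: mat_ext => i j; rewrite /act2 /wedge /mv.
rewrite -!rsum_prod -rsum_minus; apply: rsum_ext => k.
rewrite -rsum_minus; apply: rsum_ext => l; ring.
Qed.

Lemma act2_msub g A B : act2 g (msub A B) = msub (act2 g A) (act2 g B).
Proof.
apply: mat_ext => i j; rewrite /act2 /msub -rsum_minus; apply: rsum_ext => k.
rewrite -rsum_minus; apply: rsum_ext => l; ring.
Qed.

Lemma act2_lin3 g a1 a2 a3 A B C :
  act2 g (lin3 a1 a2 a3 A B C) = lin3 a1 a2 a3 (act2 g A) (act2 g B) (act2 g C).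
Proof.
apply: mat_ext => i j; rewrite /act2 /lin3 -!rsum_scal -!rsum_plus; apply: rsum_ext => k.
rewrite -!rsum_scal -!rsum_plus; apply: rsum_ext => l; ring.
Qed.

Lemma mv_lift u p0 p1 p2 p3 p4 :
  mv (liftU2 u) (mk5 p0 p1 p2 p3 p4) =
  mk5 (u q0 q0 * p0 + u q0 q1 * p1 + u q0 q2 * p2 + u q0 q3 * p3)
      (u q1 q0 * p0 + u q1 q1 * p1 + u q1 q2 * p2 + u q1 q3 * p3)
      (u q2 q0 * p0 + u q2 q1 * p1 + u q2 q2 * p2 + u q2 q3 * p3)
      (u q3 q0 * p0 + u q3 q1 * p1 + u q3 q2 * p2 + u q3 q3 * p3) p4.
Proof.
apply: vec_ext; apply: ord5_cases; rewrite /mv rsum5 /liftU2 /= ?inordE. all: rewrite /mk5 /=; ring.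
Qed.

Section Poly.
Variable I : finType.
Inductive pe : Type := PC of R | PV of I | PA of pe & pe | PM of pe & pe.
Fixpoint ev (e : pe) (x : I -> R) : R :=
  match e with PC c => c | PV i => x i | PA a b => ev a x + ev b x | PM a b => ev a x * ev b x end.
Fixpoint pd (e : pe) (j : I) : pe :=
  match e with
  | PC _ => PC 0 | PV i => PC (if i == j then 1 else 0)
  | PA a b => PA (pd a j) (pd b j)
  | PM a b => PA (PM (pd a j) b) (PM a (pd b j)) end.

Lemma shift0 (x : I -> R) j : shift x j 0 = x.
Proof. apply: functional_extensionality => i; rewrite /shift; case: ifP => _; ring. Qed.

Lemma pd_ok e x j : derivable_pt_lim (fun t => ev e (shift x j t)) 0 (ev (pd e j) x).
Proof.
elim: e => [c|i|a IHa b IHb|a IHa b IHb] /=.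
- exact: derivable_pt_lim_const.
- rewrite /shift; case: (i == j) => /=.
  + have H := derivable_pt_lim_plus _ _ _ _ _ (derivable_pt_lim_const (x i) 0) (derivable_pt_lim_id 0).
    rewrite Rplus_0_l in H; exact H.
  + exact: derivable_pt_lim_const.
- exact: (derivable_pt_lim_plus _ _ _ _ _ IHa IHb).
- have H := derivable_pt_lim_mult _ _ _ _ _ IHa IHb.
  rewrite /= shift0 in H; exact H.
Qed.

Lemma rdist_ge0 (x y : I -> R) : 0 <= rdist x y.
Proof. apply: rsum_ge0 => i; exact: Rabs_pos. Qed.

Lemma rdist_coord (x y : I -> R) i : Rabs (y i - x i) <= rdist x y.
Proof.
rewrite Rabs_minus_sym; apply: (@rsum_elem _ (fun k => Rabs (x k - y k))) => k; exact: Rabs_pos.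
Qed.

Lemma ev_lip e x : exists C, 0 <= C /\
  forall y, rdist x y < 1 -> Rabs (ev e y - ev e x) <= C * rdist x y.
Proof.
elim: e => [c|i|a [Ca [Ca0 Ha]] b [Cb [Cb0 Hb]]|a [Ca [Ca0 Ha]] b [Cb [Cb0 Hb]]] /=.
- exists 0; split; [lra|] => y _; rewrite Rminus_diag Rabs_R0; lra.
- exists 1; split; [lra|] => y _; rewrite Rmult_1_l; exact: rdist_coord.
- exists (Ca + Cb); split; [lra|] => y Hy.
  have := Ha y Hy; have := Hb y Hy.
  rewrite (_ : ev a y + ev b y - (ev a x + ev b x) = (ev a y - ev a x) + (ev b y - ev b x)); last ring.
  have := Rabs_triang (ev a y - ev a x) (ev b y - ev b x). lra.
- exists ((Rabs (ev a x) + Ca) * Cb + Rabs (ev b x) * Ca); split.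
    have := Rabs_pos (ev a x); have := Rabs_pos (ev b x); nra.
  move=> y Hy. have Hd := rdist_ge0 x y.
  have HA := Ha y Hy; have HB := Hb y Hy.
  rewrite (_ : ev a y * ev b y - ev a x * ev b x =
     ev a y * (ev b y - ev b x) + ev b x * (ev a y - ev a x)); last ring.
  have Hay : Rabs (ev a y) <= Rabs (ev a x) + Ca.
    rewrite (_ : ev a y = ev a x + (ev a y - ev a x)); last ring.
    have := Rabs_triang (ev a x) (ev a y - ev a x). nra.
  apply: Rle_trans; first exact: Rabs_triang.
  rewrite !Rabs_mult.
  have H1 : Rabs (ev a y) * Rabs (ev b y - ev b x) <= (Rabs (ev a x) + Ca) * (Cb * rdist x y).
    apply: Rmult_le_compat => //; exact: Rabs_pos.
  have H2 : Rabs (ev b x) * Rabs (ev a y - ev a x) <= Rabs (ev b x) * (Ca * rdist x y).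
    apply: Rmult_le_compat_l => //; exact: Rabs_pos.
  nra.
Qed.

Lemma ev_cont (U : (I -> R) -> Prop) e : cont_on U (ev e).
Proof.
move=> x _ eps Heps.
have [C [C0 HC]] := ev_lip e x.
exists (Rmin 1 (eps / (C + 1))); split.
  apply: Rmin_pos; [lra|]. apply: Rdiv_lt_0_compat; lra.
move=> y _ Hy.
have Hy1 : rdist x y < 1 by have := Rmin_l 1 (eps / (C + 1)); lra.
have Hy2 : rdist x y < eps / (C + 1) by have := Rmin_r 1 (eps / (C + 1)); lra.
have Hd := rdist_ge0 x y.
apply: Rle_lt_trans; first exact: HC.
have H3 : C * rdist x y <= C * (eps / (C + 1)) by apply: Rmult_le_compat_l; lra.
have H4 : C * (eps / (C + 1)) < eps.
  have -> : C * (eps / (C + 1)) = eps - eps / (C + 1) by field; lra.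
  have : 0 < eps / (C + 1) by apply: Rdiv_lt_0_compat; lra.
  lra.
lra.
Qed.

Lemma ev_Ck k (U : (I -> R) -> Prop) e : Ck_on k U (ev e).
Proof.
elim: k e => [|k IH] e /=; first exact: ev_cont.
split; first exact: ev_cont.
move=> j; exists (ev (pd e j)); split; last exact: IH.
move=> x _; exact: pd_ok.
Qed.

Definition is_poly (f : (I -> R) -> R) := exists e, forall x, f x = ev e x.

Lemma poly_Ck k U f : is_poly f -> Ck_on k U f.
Proof.
move=> [e He]; have -> : f = ev e by apply: functional_extensionality.
exact: ev_Ck.
Qed.

Lemma poly_ext f g : (forall x, f x = g x) -> is_poly f -> is_poly g.
Proof. move=> H [e He]; exists e => x; rewrite -H; exact: He. Qed.
Lemma poly_c c : is_poly (fun _ => c).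
Proof. by exists (PC c). Qed.
Lemma poly_v i : is_poly (fun x => x i).
Proof. by exists (PV i). Qed.
Lemma poly_add f g : is_poly f -> is_poly g -> is_poly (fun x => f x + g x).
Proof. move=> [a Ha] [b Hb]; exists (PA a b) => x /=; by rewrite Ha Hb. Qed.
Lemma poly_mul f g : is_poly f -> is_poly g -> is_poly (fun x => f x * g x).
Proof. move=> [a Ha] [b Hb]; exists (PM a b) => x /=; by rewrite Ha Hb. Qed.
Lemma poly_opp f : is_poly f -> is_poly (fun x => - f x).
Proof.
move=> H; apply: (@poly_ext (fun x => (-1) * f x)); first by move=> x; ring.
apply: poly_mul => //; exact: poly_c.
Qed.
Lemma poly_sub f g : is_poly f -> is_poly g -> is_poly (fun x => f x - g x).
Proof. move=> Hf Hg; apply: poly_add => //; exact: poly_opp. Qed.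
Lemma poly_divc f c : is_poly f -> is_poly (fun x => f x / c).
Proof. move=> Hf; apply: poly_mul => //; exact: poly_c. Qed.

Lemma poly_rsum (K : finType) (F : K -> (I -> R) -> R) :
  (forall k, is_poly (F k)) -> is_poly (fun x => rsum (fun k => F k x)).
Proof.
move=> H; rewrite /rsum.
elim: (index_enum K) => [|k r IH].
  apply: (@poly_ext (fun _ => 0)); first by move=> x; rewrite big_nil. exact: poly_c.
apply: (@poly_ext (fun x => F k x + \big[Rplus/0]_(i <- r) F i x)).
  by move=> x; rewrite big_cons.
exact: poly_add.
Qed.

Lemma smooth_map_poly (J : finType) (A : (I -> R) -> Prop) (F : (I -> R) -> (J -> R)) :
  (forall j, is_poly (fun x => F x j)) -> smooth_map A F.
Proof.
move=> H a Ha; exists (fun _ => True); split.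
  move=> x _; exists 1; split; [lra|done].
split=> //; exists F; split=> //.
move=> k j; exact: poly_Ck.
Qed.
End Poly.

Ltac solve_poly :=
  repeat first [ progress intros | apply: poly_c | apply: poly_v | apply: poly_add | apply: poly_sub
               | apply: poly_mul | apply: poly_opp | apply: poly_divc | apply: poly_rsum ].

Definition um (a b e f m n : R) (i j : 'I_4) : R :=
  match nat_of_ord i, nat_of_ord j with
  | 0,0 => a | 1,0 => b | 2,0 => e | _,0 => f
  | 0,1 => -b | 1,1 => a | 2,1 => -f | _,1 => e
  | 0,2 => -m*e - n*f | 1,2 => m*f - n*e | 2,2 => m*a+n*b | _,2 => -m*b+n*a
  | 0,_ => -(m*f - n*e) | 1,_ => -m*e-n*f | 2,_ => -(-m*b+n*a) | _,_ => m*a+n*b end.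

Lemma um_U2 a b e f m n : a*a+b*b+e*e+f*f = 1 -> m*m+n*n = 1 -> U2 (um a b e f m n).
Proof.
move=> H1 H2; split; apply: ord4_cases; apply: ord4_cases;
  rewrite !rsum4 /delta /Jmat /um /=. all: try ring. all: nra.
Qed.

Lemma U2_um u : U2 u -> exists a b e f m n,
  a*a+b*b+e*e+f*f = 1 /\ m*m+n*n = 1 /\ u = um a b e f m n.
Proof.
move=> [Ho Hc].
have E00 := Hc q0 q0; have E10 := Hc q1 q0; have E20 := Hc q2 q0; have E30 := Hc q3 q0.
have E02 := Hc q0 q2; have E12 := Hc q1 q2; have E22 := Hc q2 q2; have E32 := Hc q3 q2.
have O00 := Ho q0 q0; have O22 := Ho q2 q2; have O02 := Ho q0 q2; have O12 := Ho q1 q2.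
rewrite !rsum4 in E00 E10 E20 E30 E02 E12 E22 E32 O00 O22 O02 O12.
rewrite /delta /Jmat /= in E00 E10 E20 E30 E02 E12 E22 E32 O00 O22 O02 O12.
set a := u q0 q0 in E00 E10 E20 E30 E02 E12 E22 E32 O00 O22 O02 O12 *; set b := u q1 q0 in E00 E10 E20 E30 E02 E12 E22 E32 O00 O22 O02 O12 *; set e := u q2 q0 in E00 E10 E20 E30 E02 E12 E22 E32 O00 O22 O02 O12 *; set f := u q3 q0 in E00 E10 E20 E30 E02 E12 E22 E32 O00 O22 O02 O12 *.
set c := u q0 q2 in E00 E10 E20 E30 E02 E12 E22 E32 O00 O22 O02 O12 *; set d := u q1 q2 in E00 E10 E20 E30 E02 E12 E22 E32 O00 O22 O02 O12 *; set g := u q2 q2 in E00 E10 E20 E30 E02 E12 E22 E32 O00 O22 O02 O12 *; set h := u q3 q2 in E00 E10 E20 E30 E02 E12 E22 E32 O00 O22 O02 O12 *.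
have U01 : u q0 q1 = - b by lra.
have U11 : u q1 q1 = a by lra.
have U21 : u q2 q1 = - f by lra.
have U31 : u q3 q1 = e by lra.
have U03 : u q0 q3 = - d by lra.
have U13 : u q1 q3 = c by lra.
have U23 : u q2 q3 = - h by lra.
have U33 : u q3 q3 = g by lra.
rewrite U01 U11 U21 U31 in O12.
set m := - c * e + d * f + g * a - h * b.
set n := - c * f - d * e + g * b + h * a.
have S1 : a*a+b*b+e*e+f*f = 1 by lra.
have P1 : a*c+b*d+e*g+f*h = 0 by lra.
have P2 : -b*c+a*d-f*g+e*h = 0 by lra.
have Hc' : c = - m * e - n * f.
  have : (a*a+b*b+e*e+f*f) * c = (a*c+b*d+e*g+f*h)*a + (-b*c+a*d-f*g+e*h)*(-b) + m*(-e) + n*(-f)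
    by rewrite /m /n; ring.
  rewrite S1 P1 P2; lra.
have Hd' : d = m * f - n * e.
  have : (a*a+b*b+e*e+f*f) * d = (a*c+b*d+e*g+f*h)*b + (-b*c+a*d-f*g+e*h)*a + m*f + n*(-e)
    by rewrite /m /n; ring.
  rewrite S1 P1 P2; lra.
have Hg' : g = m * a + n * b.
  have : (a*a+b*b+e*e+f*f) * g = (a*c+b*d+e*g+f*h)*e + (-b*c+a*d-f*g+e*h)*(-f) + m*a + n*b
    by rewrite /m /n; ring.
  rewrite S1 P1 P2; lra.
have Hh' : h = - m * b + n * a.
  have : (a*a+b*b+e*e+f*f) * h = (a*c+b*d+e*g+f*h)*f + (-b*c+a*d-f*g+e*h)*e + m*(-b) + n*a
    by rewrite /m /n; ring.
  rewrite S1 P1 P2; lra.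
have S2 : m*m+n*n = 1.
  have : m*m+n*n = (a*a+b*b+e*e+f*f) * (c*c+d*d+g*g+h*h) - (a*c+b*d+e*g+f*h)*(a*c+b*d+e*g+f*h)
      - (-b*c+a*d-f*g+e*h)*(-b*c+a*d-f*g+e*h) by rewrite /m /n; ring.
  rewrite S1 P1 P2. lra.
exists a, b, e, f, m, n; split; [exact S1|split; [exact S2|]].
apply: functional_extensionality => i; apply: functional_extensionality => j.
move: i j; apply: ord4_cases; apply: ord4_cases; rewrite /um /=;
  rewrite ?U01 ?U11 ?U21 ?U31 ?U03 ?U13 ?U23 ?U33; rewrite -/a -/b -/c -/d -/e -/f -/g -/h;
  rewrite ?Hc' ?Hd' ?Hg' ?Hh'; ring.
Qed.

Lemma act2_msw g p q r s : act2 g (msub (wedge p q) (wedge r s)) =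
  msub (wedge (mv g p) (mv g q)) (wedge (mv g r) (mv g s)).
Proof. by rewrite act2_msub !act2_wedge. Qed.

Section Cols.
Variables a b e f m n : R.
Definition cc0 := mk5 a b e f 0.
Definition cc1 := mk5 (-b) a (-f) e 0.
Definition cc2 := mk5 (-m*e-n*f) (m*f-n*e) (m*a+n*b) (-m*b+n*a) 0.
Definition cc3s (s : R) := mk5 (s*(-(m*f-n*e))) (s*(-m*e-n*f)) (s*(-(-m*b+n*a))) (s*(m*a+n*b)) 0.
Definition cc3 := cc3s 1.
Definition gg := liftU2 (um a b e f m n).

Lemma mv_E1 : mv gg (mk5 1 0 0 0 0) = cc0.
Proof. rewrite /gg mv_lift /um /cc0 /=; congr mk5; ring. Qed.
Lemma mv_E2 : mv gg (mk5 0 1 0 0 0) = cc1.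
Proof. rewrite /gg mv_lift /um /cc1 /=; congr mk5; ring. Qed.
Lemma mv_E3 : mv gg (mk5 0 0 1 0 0) = cc2.
Proof. rewrite /gg mv_lift /um /cc2 /=; congr mk5; ring. Qed.
Lemma mv_E4s s : mv gg (mk5 0 0 0 s 0) = cc3s s.
Proof. rewrite /gg mv_lift /um /cc3s /=; congr mk5; ring. Qed.
Lemma mv_E4 : mv gg (mk5 0 0 0 1 0) = cc3.
Proof. exact: mv_E4s. Qed.
Lemma mv_x x1 x5 : mv gg (mk5 x1 0 0 0 x5) = mk5 (a*x1) (b*x1) (e*x1) (f*x1) x5.
Proof. rewrite /gg mv_lift /um /=; congr mk5; ring. Qed.
Lemma mv_phi x1 x5 : mv gg (mk5 (-x5) 0 0 0 x1) = mk5 (-x5*a) (-x5*b) (-x5*e) (-x5*f) x1.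
Proof. rewrite /gg mv_lift /um /=; congr mk5; ring. Qed.
Lemma mv_pole s : mv gg (pole s) = pole s.
Proof. rewrite /gg /pole mv_lift /um /=; congr mk5; ring. Qed.
End Cols.

Lemma nrm_x x1 x5 : 0 <= x1 -> x1*x1+x5*x5 = 1 -> nrm (mk5 x1 0 0 0 x5) = x1.
Proof.
move=> H0 H1; rewrite /nrm /co inord5_4 /mk5 /=.
rewrite (_ : 1 - x5 * x5 = x1 * x1); last lra.
exact: sqrt_square.
Qed.

Section Fib.
Variables x1 x5 : R.
Hypothesis H0 : 0 <= x1.
Hypothesis Hx : x1 <> 0.
Hypothesis H1 : x1*x1+x5*x5 = 1.
Let x := mk5 x1 0 0 0 x5.

Ltac fcase := apply: vec_ext; apply: ord5_cases; rewrite /sc /co /x !inordE /mk5 /=;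
  first [field; exact Hx | rewrite (_ : 1 - x5 * x5 = x1 * x1); [field; exact Hx | lra]].

Lemma fe1_x : fe1 x = mk5 0 1 0 0 0.
Proof. rewrite /fe1 nrm_x //; fcase. Qed.
Lemma fe2_x : fe2 x = mk5 0 0 1 0 0.
Proof. rewrite /fe2 nrm_x //; fcase. Qed.
Lemma fe3_x : fe3 x = mk5 0 0 0 1 0.
Proof. rewrite /fe3 nrm_x //; fcase. Qed.
Lemma fe4_x : fe4 x = mk5 (-x5) 0 0 0 x1.
Proof. rewrite /fe4 nrm_x //; fcase. Qed.

Lemma act_fiber a b e f m n a1 a2 a3 :
  act (liftU2 (um a b e f m n)) (x, fiber_form x a1 a2 a3) =
  (mk5 (a*x1) (b*x1) (e*x1) (f*x1) x5,
   let PH := mk5 (-x5*a) (-x5*b) (-x5*e) (-x5*f) x1 in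
   let C1 := cc1 a b e f in let C2 := cc2 a b e f m n in let C3 := cc3 a b e f m n in
   lin3 a1 a2 a3 (msub (wedge C1 C2) (wedge C3 PH)) (msub (wedge C1 C3) (wedge PH C2))
     (msub (wedge C1 PH) (wedge C2 C3))).
Proof.
rewrite act_eq /=; congr pair.
  exact: mv_x.
change (fiber_form x a1 a2 a3) with (lin3 a1 a2 a3 (omega1 x) (omega2 x) (omega3 x)).
rewrite act2_lin3 /omega1 /omega2 /omega3 !act2_msw fe1_x fe2_x fe3_x fe4_x.
rewrite -/(gg a b e f m n) mv_E2 mv_E3 mv_E4 mv_phi //.
Qed.
End Fib.

Lemma act_pole a b e f m n s A1 A2 A3 :
  act (liftU2 (um a b e f m n)) (pole s, pole_form s A1 A2 A3) =
  (pole s,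
   let C0 := cc0 a b e f in let C1 := cc1 a b e f in let C2 := cc2 a b e f m n in
   let C3 := cc3s a b e f m n s in
   lin3 A1 A2 A3 (msub (wedge C0 C1) (wedge C2 C3)) (msub (wedge C0 C2) (wedge C3 C1))
     (msub (wedge C0 C3) (wedge C1 C2))).
Proof.
rewrite act_eq /=; congr pair.
  exact: mv_pole.
change (pole_form s A1 A2 A3) with (lin3 A1 A2 A3 (Omega1 s) (Omega2 s) (Omega3 s)).
rewrite act2_lin3 /Omega1 /Omega2 /Omega3 !act2_msw /pf1 /pf2 /pf3 /pf4.
rewrite -/(gg a b e f m n) mv_E1 mv_E2 mv_E3 mv_E4s //.
Qed.

Lemma part1 p : in_Lambda2m p ->
  exists u, U2 u /\ exists x1 x5, 0 <= x1 /\ (act (liftU2 u) p).1 = mk5 x1 0 0 0 x5.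
Proof.
move=> _.
suff: exists u, U2 u /\ exists x1 x5, 0 <= x1 /\ mv (liftU2 u) p.1 = mk5 x1 0 0 0 x5 by [].
move: p.1 => y; rewrite (mk5_eta y).
move: (y o5_0) (y o5_1) (y o5_2) (y o5_3) (y o5_4) => y0 y1 y2 y3 y4.
set r2 := y0*y0+y1*y1+y2*y2+y3*y3.
have Hr2 : 0 <= r2 by rewrite /r2; nra.
case: (Req_dec r2 0) => Hz.
  exists (um 1 0 0 0 1 0); split; first by apply: um_U2; lra.
  exists 0, y4; split; first lra.
  have Z0 : y0 = 0 by rewrite /r2 in Hz; nra.
  have Z1 : y1 = 0 by rewrite /r2 in Hz; nra.
  have Z2 : y2 = 0 by rewrite /r2 in Hz; nra.
  have Z3 : y3 = 0 by rewrite /r2 in Hz; nra.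
  rewrite mv_lift /um /= Z0 Z1 Z2 Z3; congr mk5; ring.
set r := sqrt r2.
have Hr : r * r = r2 by apply: sqrt_sqrt.
have Hr0 : 0 < r by apply: sqrt_lt_R0; lra.
exists (um (y0/r) (-y1/r) (-y2/r) (-y3/r) 1 0); split.
  apply: um_U2; last lra.
  field_simplify_eq; [rewrite /r2 in Hr; nra | lra].
exists r, y4; split; first lra.
rewrite mv_lift /um /=; congr mk5.
- field_simplify_eq; [rewrite /r2 in Hr; nra | lra].
- field; lra.
- field; lra.
- field; lra.
Qed.

Notation Ix := ('I_5 + 'I_5 * 'I_5)%type.

Lemma orbit_um p0 v : orbit p0 v -> exists a b e f m n,
  a*a+b*b+e*e+f*f = 1 /\ m*m+n*n = 1 /\ v = emb (act (liftU2 (um a b e f m n)) p0).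
Proof.
move=> [u [Hu ->]]; have [a [b [e [f [m [n [H1 [H2 ->]]]]]]]] := U2_um Hu.
by exists a, b, e, f, m, n.
Qed.

Lemma poly_lift (k l : 'I_5) : is_poly (fun w : 'I_4 * 'I_4 -> R => liftU2 (fun i j => w (i, j)) k l).
Proof. rewrite /liftU2; case: (_ && _); [exact: poly_v | case: (_ && _); exact: poly_c]. Qed.

Ltac solve_poly2 :=
  repeat first [ progress intros | apply: poly_c | apply: poly_lift | apply: poly_v | apply: poly_add | apply: poly_sub
               | apply: poly_mul | apply: poly_opp | apply: poly_divc | apply: poly_rsum ].

Definition J4 (w : nat -> R) (i : nat) : R :=
  match i with 0 => - w 1%N | 1 => w 0%N | 2 => - w 3%N | _ => w 2%N end.
Definition w0 (x1 : R) (v : Ix -> R) (k : nat) := / x1 * v (inl (inord k)).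
Definition rr (x1 a3 : R) (v : Ix -> R) (k : nat) :=
  / x1 * v (inr (inord k, inord 4)) - a3 * J4 (w0 x1 v) k.
Definition col2 (x1 a1 a2 a3 : R) (v : Ix -> R) (k : nat) :=
  / (a1*a1+a2*a2) * (a2 * rr x1 a3 v k + a1 * J4 (rr x1 a3 v) k).
Definition f1 (x1 a1 a2 a3 : R) (v : Ix -> R) (ij : 'I_4 * 'I_4) : R :=
  match nat_of_ord ij.2 with
  | 0 => w0 x1 v ij.1 | 1 => J4 (w0 x1 v) ij.1
  | 2 => col2 x1 a1 a2 a3 v ij.1 | _ => J4 (col2 x1 a1 a2 a3 v) ij.1 end.

Lemma x1_nz x1 x5 : 0 <= x1 -> x1*x1+x5*x5 = 1 -> x5 <> 1 -> x5 <> -1 -> x1 <> 0.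
Proof.
move=> H0 H1 Hn1 Hn2 Hx; subst x1.
have : (x5 - 1) * (x5 + 1) = 0 by lra.
case/Rmult_integral => ?; [apply: Hn1 | apply: Hn2]; lra.
Qed.

Definition vec4 (a b e f : R) (i : 'I_4) : R :=
  match nat_of_ord i with 0 => a | 1 => b | 2 => e | _ => f end.
Definition f3 (x1 : R) (v : Ix -> R) (i : 'I_4) : R := / x1 * v (inl (inord i)).

Lemma mod_s (s X Y : R) : s = 1 -> X = s * Y -> X = Y.
Proof. by move=> -> ->; ring. Qed.

Lemma wedge23 a b e f m n : m*m+n*n = 1 ->
  wedge (cc2 a b e f m n) (cc3 a b e f m n) = wedge (cc2 a b e f 1 0) (cc3 a b e f 1 0).
Proof.
move=> H2; apply: mat_ext; apply: ord5_cases; apply: ord5_cases;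
rewrite /wedge /cc2 /cc3 /cc3s /mk5 /=; apply: (mod_s H2); ring.
Qed.

Lemma poly_lift_um (k l : 'I_5) :
  is_poly (fun w : 'I_4 -> R => liftU2 (um (w q0) (w q1) (w q2) (w q3) 1 0) k l).
Proof.
rewrite /liftU2; case: (_ && _); last by case: (_ && _); exact: poly_c.
rewrite /um; case: (nat_of_ord (@inord 3 k)) => [|[|[|?]]];
  case: (nat_of_ord (@inord 3 l)) => [|[|[|?]]]; solve_poly.
Qed.

Section Fiber.
Variables x1 x5 a1 a2 a3 : R.
Hypothesis H0 : 0 <= x1.
Hypothesis Hx : x1 <> 0.
Hypothesis H1 : x1*x1+x5*x5 = 1.
Let x := mk5 x1 0 0 0 x5.
Let p0 : bpoint := (x, fiber_form x a1 a2 a3).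

Lemma F1 a b e f m n : a1*a1+a2*a2 <> 0 ->
  f1 x1 a1 a2 a3 (emb (act (liftU2 (um a b e f m n)) p0)) = fun ij => um a b e f m n ij.1 ij.2.
Proof.
move=> Ha; rewrite /p0 act_fiber //.
apply: functional_extensionality => -[i j]; move: i j.
apply: ord4_cases; apply: ord4_cases;
rewrite /f1 /col2 /rr /J4 /w0 /= !inordE /emb /lin3 /msub /wedge /cc1 /cc2 /cc3 /cc3s /mk5 /um /=;
field; try (split; assumption); assumption.
Qed.

Lemma fib_U2 : (a1 <> 0 \/ a2 <> 0) -> diffeomorphic (orbit p0) U2_set.
Proof.
move=> Ha. have Ha' : a1*a1+a2*a2 <> 0 by case: Ha => H; nra.
exists (f1 x1 a1 a2 a3), (fun w => emb (act (liftU2 (fun i j => w (i,j))) p0)).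
split; [|split; [|split; [|split; [|split]]]].
- move=> v /orbit_um [a [b [e [f [m [n [S1 [S2 ->]]]]]]]].
  rewrite F1 //; exact: um_U2.
- by move=> w Hw; exists (fun i j => w (i,j)).
- move=> v /orbit_um [a [b [e [f [m [n [S1 [S2 ->]]]]]]]].
  by rewrite F1.
- move=> w Hw. have [a [b [e [f [m [n [S1 [S2 Hu]]]]]]]] := U2_um Hw.
  rewrite Hu F1 //.
  apply: functional_extensionality => -[i j] /=. by rewrite -Hu.
- apply: smooth_map_poly => -[i j]; move: i j; apply: ord4_cases; apply: ord4_cases;
  rewrite /f1 /col2 /rr /J4 /w0 /=; solve_poly.
- apply: smooth_map_poly => -[i|[i j]]; rewrite /act /=; solve_poly2.
Qed.

Lemma F3 a b e f m n :
  f3 x1 (emb (act (liftU2 (um a b e f m n)) p0)) = vec4 a b e f.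
Proof.
rewrite /p0 act_fiber //.
apply: functional_extensionality; apply: ord4_cases;
rewrite /f3 /= !inordE /emb /mk5 /vec4 /=; field; assumption.
Qed.

Lemma fib_S3 : a1 = 0 /\ a2 = 0 -> diffeomorphic (orbit p0) (sphere 3).
Proof.
move=> [Ha1 Ha2].
exists (f3 x1), (fun w => emb (act (liftU2 (um (w q0) (w q1) (w q2) (w q3) 1 0)) p0)).
split; [|split; [|split; [|split; [|split]]]].
- move=> v /orbit_um [a [b [e [f [m [n [S1 [S2 ->]]]]]]]].
  rewrite F3 /sphere rsum4 /vec4 /=; lra.
- move=> w Hw; exists (um (w q0) (w q1) (w q2) (w q3) 1 0); split=> //.
  apply: um_U2; last lra. by rewrite /sphere rsum4 in Hw.
- move=> v /orbit_um [a [b [e [f [m [n [S1 [S2 ->]]]]]]]].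
  rewrite F3 /vec4 /= /p0 !act_fiber // /= wedge23 //.
  congr (emb (_, _)). rewrite Ha1 Ha2; apply: mat_ext => i j; rewrite /lin3; ring.
- move=> w Hw. rewrite F3.
  by apply: functional_extensionality; apply: ord4_cases.
- apply: smooth_map_poly => i; rewrite /f3; solve_poly.
- apply: smooth_map_poly => -[i|[i j]]; rewrite /act /=; solve_poly;
  apply: poly_lift_um.
Qed.
End Fiber.

Lemma mod_lin (K1 K2 s1 s2 X Y : R) : s1 = 1 -> s2 = 1 ->
  X - Y = K1 * (s1 - 1) + K2 * (s2 - 1) -> X = Y.
Proof. move=> -> -> H; lra. Qed.
Arguments mod_lin : clear implicits.

Definition PR1 (a b e f m n A1 A2 A3 : R) := ((1)*A1 + (-2)*f^2*A1 + (-2)*e^2*A1 + (2)*b*f*n*A2 + (2)*b*f*m*A3 + (-2)*b*e*n*A3 + (2)*b*e*m*A2 + (-2)*a*f*n*A3 + (2)*a*f*m*A2 + (-2)*a*e*n*A2 + (-2)*a*e*m*A3).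
Definition PR2 (a b e f m n A1 A2 A3 : R) := ((-1)*n*A3 + (1)*m*A2 + (2)*f^2*n*A3 + (-2)*f^2*m*A2 + (2)*e*f*n*A2 + (2)*e*f*m*A3 + (2)*b*e*A1 + (2)*b^2*n*A3 + (-2)*b^2*m*A2 + (-2)*a*f*A1 + (2)*a*b*n*A2 + (2)*a*b*m*A3).
Definition PR3 (a b e f m n A1 A2 A3 : R) := ((1)*n*A2 + (1)*m*A3 + (-2)*e*f*n*A3 + (2)*e*f*m*A2 + (-2)*e^2*n*A2 + (-2)*e^2*m*A3 + (2)*b*f*A1 + (-2)*b^2*n*A2 + (-2)*b^2*m*A3 + (2)*a*e*A1 + (2)*a*b*n*A3 + (-2)*a*b*m*A2).

Lemma pole1_nf a b e f m n A1 A2 A3 : a*a+b*b+e*e+f*f = 1 -> m*m+n*n = 1 ->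
  act (liftU2 (um a b e f m n)) (pole 1, pole_form 1 A1 A2 A3) =
  (pole 1, pole_form 1 (PR1 a b e f m n A1 A2 A3) (PR2 a b e f m n A1 A2 A3) (PR3 a b e f m n A1 A2 A3)).
Proof.
move=> H1 H2; rewrite act_pole /=; congr pair.
(apply: mat_ext; apply: ord5_cases; apply: ord5_cases; rewrite /PR1 /PR2 /PR3; rewrite /pole_form /Omega1 /Omega2 /Omega3 /pf1 /pf2 /pf3 /pf4 /lin3 /msub /wedge /cc0 /cc1 /cc2 /cc3s /mk5 /=);
[ ring
  | apply: (mod_lin ((1)*A1) ((-1)*f^2*A1 + (-1)*e^2*A1) _ _ _ _ H1 H2); ring
  | apply: (mod_lin ((-1)*n*A3 + (1)*m*A2) ((1)*b*e*A1 + (-1)*a*f*A1) _ _ _ _ H1 H2); ring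
  | apply: (mod_lin ((1)*n*A2 + (1)*m*A3) ((1)*b*f*A1 + (1)*a*e*A1) _ _ _ _ H1 H2); ring
  | ring
  | apply: (mod_lin ((-1)*A1) ((1)*f^2*A1 + (1)*e^2*A1) _ _ _ _ H1 H2); ring
  | ring
  | apply: (mod_lin ((-1)*n*A2 + (-1)*m*A3) ((-1)*b*f*A1 + (-1)*a*e*A1) _ _ _ _ H1 H2); ring
  | apply: (mod_lin ((-1)*n*A3 + (1)*m*A2) ((1)*b*e*A1 + (-1)*a*f*A1) _ _ _ _ H1 H2); ring
  | ring
  | apply: (mod_lin ((1)*n*A3 + (-1)*m*A2) ((-1)*b*e*A1 + (1)*a*f*A1) _ _ _ _ H1 H2); ring
  | apply: (mod_lin ((1)*n*A2 + (1)*m*A3) ((1)*b*f*A1 + (1)*a*e*A1) _ _ _ _ H1 H2); ring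
  | ring
  | apply: (mod_lin ((-1)*n^2*A1 + (-1)*m^2*A1) ((-1)*A1 + (1)*f^2*A1 + (1)*e^2*A1) _ _ _ _ H1 H2); ring
  | ring
  | apply: (mod_lin ((-1)*n*A2 + (-1)*m*A3) ((-1)*b*f*A1 + (-1)*a*e*A1) _ _ _ _ H1 H2); ring
  | apply: (mod_lin ((1)*n*A3 + (-1)*m*A2) ((-1)*b*e*A1 + (1)*a*f*A1) _ _ _ _ H1 H2); ring
  | apply: (mod_lin ((1)*n^2*A1 + (1)*m^2*A1) ((1)*A1 + (-1)*f^2*A1 + (-1)*e^2*A1) _ _ _ _ H1 H2); ring
  | ring
  | ring
  | ring
  | ring
  | ring
  | ring
  | ring ].
Qed.

Lemma pole1_norm a b e f m n A1 A2 A3 : a*a+b*b+e*e+f*f = 1 -> m*m+n*n = 1 ->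
  PR1 a b e f m n A1 A2 A3 * PR1 a b e f m n A1 A2 A3 + PR2 a b e f m n A1 A2 A3 * PR2 a b e f m n A1 A2 A3
  + PR3 a b e f m n A1 A2 A3 * PR3 a b e f m n A1 A2 A3 = A1*A1+A2*A2+A3*A3.
Proof.
move=> H1 H2; rewrite /PR1 /PR2 /PR3.
apply: (mod_lin ((4)*f^2*A1^2 + (4)*f^2*n^2*A3^2 + (-8)*f^2*m*n*A2*A3 + (4)*f^2*m^2*A2^2 + (8)*e*f*n^2*A2*A3 + (8)*e*f*m*n*A3^2 + (-8)*e*f*m*n*A2^2 + (-8)*e*f*m^2*A2*A3 + (4)*e^2*A1^2 + (4)*e^2*n^2*A2^2 + (8)*e^2*m*n*A2*A3 + (4)*e^2*m^2*A3^2 + (-8)*b*f*n*A1*A2 + (-8)*b*f*m*A1*A3 + (8)*b*e*n*A1*A3 + (-8)*b*e*m*A1*A2 + (4)*b^2*n^2*A3^2 + (4)*b^2*n^2*A2^2 + (4)*b^2*m^2*A3^2 + (4)*b^2*m^2*A2^2) ((1)*A3^2 + (1)*A2^2) _ _ _ _ H1 H2); ring.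
Qed.

Lemma polem1_nf a b e f m n A1 A2 A3 : a*a+b*b+e*e+f*f = 1 -> m*m+n*n = 1 ->
  act (liftU2 (um a b e f m n)) (pole (-1), pole_form (-1) A1 A2 A3) =
  (pole (-1), pole_form (-1) A1 (m*A2+n*A3) (m*A3-n*A2)).
Proof.
move=> H1 H2; rewrite act_pole /=; congr pair.
(apply: mat_ext; apply: ord5_cases; apply: ord5_cases; rewrite /pole_form /Omega1 /Omega2 /Omega3 /pf1 /pf2 /pf3 /pf4 /lin3 /msub /wedge /cc0 /cc1 /cc2 /cc3s /mk5 /=);
[ ring
  | apply: (mod_lin ((1)*A1) ((1)*f^2*A1 + (1)*e^2*A1) _ _ _ _ H1 H2); ring
  | apply: (mod_lin ((1)*n*A3 + (1)*m*A2) ((-1)*b*e*A1 + (1)*a*f*A1) _ _ _ _ H1 H2); ring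
  | apply: (mod_lin ((1)*n*A2 + (-1)*m*A3) ((-1)*b*f*A1 + (-1)*a*e*A1) _ _ _ _ H1 H2); ring
  | ring
  | apply: (mod_lin ((-1)*A1) ((-1)*f^2*A1 + (-1)*e^2*A1) _ _ _ _ H1 H2); ring
  | ring
  | apply: (mod_lin ((1)*n*A2 + (-1)*m*A3) ((1)*b*f*A1 + (1)*a*e*A1) _ _ _ _ H1 H2); ring
  | apply: (mod_lin ((-1)*n*A3 + (-1)*m*A2) ((-1)*b*e*A1 + (1)*a*f*A1) _ _ _ _ H1 H2); ring
  | ring
  | apply: (mod_lin ((-1)*n*A3 + (-1)*m*A2) ((1)*b*e*A1 + (-1)*a*f*A1) _ _ _ _ H1 H2); ring
  | apply: (mod_lin ((-1)*n*A2 + (1)*m*A3) ((-1)*b*f*A1 + (-1)*a*e*A1) _ _ _ _ H1 H2); ring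
  | ring
  | apply: (mod_lin ((1)*n^2*A1 + (1)*m^2*A1) ((1)*A1 + (-1)*f^2*A1 + (-1)*e^2*A1) _ _ _ _ H1 H2); ring
  | ring
  | apply: (mod_lin ((-1)*n*A2 + (1)*m*A3) ((1)*b*f*A1 + (1)*a*e*A1) _ _ _ _ H1 H2); ring
  | apply: (mod_lin ((1)*n*A3 + (1)*m*A2) ((1)*b*e*A1 + (-1)*a*f*A1) _ _ _ _ H1 H2); ring
  | apply: (mod_lin ((-1)*n^2*A1 + (-1)*m^2*A1) ((-1)*A1 + (1)*f^2*A1 + (1)*e^2*A1) _ _ _ _ H1 H2); ring
  | ring
  | ring
  | ring
  | ring
  | ring
  | ring
  | ring ].
Qed.

Lemma exist_n A1 A2 A3 r b1 b2 b3 : 0 < r -> r*r = A1*A1+A2*A2+A3*A3 -> b1*b1+b2*b2+b3*b3 = 1 ->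
  exists n1 n2 n3, n1*n1+n2*n2+n3*n3 = 1 /\
    2*n1*(n1*A1+n2*A2+n3*A3) - A1 = r*b1 /\
    2*n2*(n1*A1+n2*A2+n3*A3) - A2 = r*b2 /\
    2*n3*(n1*A1+n2*A2+n3*A3) - A3 = r*b3.
Proof.
move=> Hr0 Hr Hb.
pose w1 := A1 + r*b1. pose w2 := A2 + r*b2. pose w3 := A3 + r*b3.
pose W := w1*w1+w2*w2+w3*w3.
case: (Req_dec W 0) => HW.
  have Z1 : w1 = 0 by rewrite /W in HW; nra.
  have Z2 : w2 = 0 by rewrite /W in HW; nra.
  have Z3 : w3 = 0 by rewrite /W in HW; nra.
  rewrite /w1 in Z1; rewrite /w2 in Z2; rewrite /w3 in Z3.
  case: (Req_dec (A1*A1+A2*A2) 0) => HA.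
    have Y1 : A1 = 0 by nra.
    have Y2 : A2 = 0 by nra.
    exists 1, 0, 0; rewrite Y1 Y2; split; [ring|split; [|split]]; nra.
  pose d := sqrt (A1*A1+A2*A2).
  have Hd : d * d = A1*A1+A2*A2 by apply: sqrt_sqrt; nra.
  have Hd0 : 0 < d by apply: sqrt_lt_R0; nra.
  exists (-A2/d), (A1/d), 0; split.
    field_simplify_eq; [lra|lra].
  have E : -A2/d*A1 + A1/d*A2 + 0*A3 = 0 by field; lra.
  rewrite E; split; [|split]; lra.
pose D := sqrt W.
have HW0 : 0 <= W by rewrite /W; nra.
have HD : D * D = W by apply: sqrt_sqrt.
have HD0 : 0 < D by apply: sqrt_lt_R0; lra.
have E2 : 2*(w1*A1+w2*A2+w3*A3) = W.
  have E : W - 2*(w1*A1+w2*A2+w3*A3) = r*r*(b1*b1+b2*b2+b3*b3) - (A1*A1+A2*A2+A3*A3)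
    by rewrite /W /w1 /w2 /w3; ring.
  rewrite Hb -Hr in E; lra.
exists (w1/D), (w2/D), (w3/D); split.
  rewrite (_ : w1/D*(w1/D)+w2/D*(w2/D)+w3/D*(w3/D) = W / (D*D)); last by rewrite /W; field; lra.
  rewrite HD; field; exact HW.
have key : forall wk, 2*(wk/D)*(w1/D*A1+w2/D*A2+w3/D*A3) = wk.
  move=> wk; rewrite (_ : 2*(wk/D)*(w1/D*A1+w2/D*A2+w3/D*A3) = wk * (2*(w1*A1+w2*A2+w3*A3)) / (D*D));
    last by field; lra.
  rewrite E2 HD; field; exact HW.
rewrite !key /w1 /w2 /w3; split; [|split]; ring.
Qed.

Definition vec3 (x y z : R) (i : 'I_3) : R := match nat_of_ord i with 0 => x | 1 => y | _ => z end.
Definition vec2 (x y : R) (i : 'I_2) : R := match nat_of_ord i with 0 => x | _ => y end.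
Definition fP1 (r : R) (v : Ix -> R) (k : 'I_3) : R := / r * v (inr (o5_0, inord k.+1)).

Lemma FP1 r B1 B2 B3 : fP1 r (emb (pole 1, pole_form 1 B1 B2 B3)) = vec3 (/r*B1) (/r*B2) (/r*B3).
Proof.
apply: functional_extensionality; apply: ord3_cases; rewrite /fP1 /= !inordE /vec3 /=;
rewrite /pole_form /Omega1 /Omega2 /Omega3 /pf1 /pf2 /pf3 /pf4 /msub /wedge /mk5 /=; ring.
Qed.

Lemma pform_zero s A1 A2 A3 : (forall i j, pole_form s A1 A2 A3 i j = 0) ->
  A1 = 0 /\ A2 = 0 /\ (s * A3 = 0).
Proof.
move=> H.
have H1 := H o5_0 o5_1; have H2 := H o5_0 o5_2; have H3 := H o5_0 o5_3.
rewrite /pole_form /Omega1 /Omega2 /Omega3 /pf1 /pf2 /pf3 /pf4 /msub /wedge /mk5 /= in H1 H2 H3.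
ring_simplify in H1; ring_simplify in H2; ring_simplify in H3.
split; [lra|split; lra].
Qed.

Lemma pole1_case A1 A2 A3 :
  let p0 : bpoint := (pole 1, pole_form 1 A1 A2 A3) in
  (~ (forall i j, p0.2 i j = 0) -> diffeomorphic (orbit p0) (sphere 2%nat)) /\
  ((forall i j, p0.2 i j = 0) -> diffeomorphic (orbit p0) point_set).
Proof.
move=> p0; split.
- move=> Hnz.
  have HA : A1*A1+A2*A2+A3*A3 <> 0.
    move=> HA; apply: Hnz => i j; rewrite /p0 /=.
    have [-> [-> ->]] : A1 = 0 /\ A2 = 0 /\ A3 = 0 by split; [nra|split; nra].
    rewrite /= /pole_form; ring.
  pose r := sqrt (A1*A1+A2*A2+A3*A3).
  have Hr : r * r = A1*A1+A2*A2+A3*A3 by apply: sqrt_sqrt; nra.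
  have Hr0 : 0 < r by apply: sqrt_lt_R0; nra.
  exists (fP1 r), (fun bb => emb (pole 1, pole_form 1 (r * bb t0) (r * bb t1) (r * bb t2))).
  split; [|split; [|split; [|split; [|split]]]].
  + move=> v /orbit_um [a [b [e [f [m [n [S1 [S2 ->]]]]]]]].
    rewrite /p0 pole1_nf // FP1 /sphere rsum3 /vec3 /=.
    have N := pole1_norm A1 A2 A3 S1 S2.
    move: N; set P1 := PR1 _ _ _ _ _ _ _ _ _; set P2 := PR2 _ _ _ _ _ _ _ _ _;
      set P3 := PR3 _ _ _ _ _ _ _ _ _ => N.
    rewrite (_ : /r*P1*(/r*P1) + /r*P2*(/r*P2) + /r*P3*(/r*P3) = (P1*P1+P2*P2+P3*P3) / (r*r));
      last by field; lra.
    rewrite N Hr; field; exact HA.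
  + move=> bb Hb; rewrite /sphere rsum3 in Hb.
    have [n1 [n2 [n3 [Hn [E1 [E2 E3]]]]]] := exist_n Hr0 Hr Hb.
    exists (um 0 n1 n2 n3 1 0); split; first by apply: um_U2; lra.
    rewrite /p0 pole1_nf; [|lra|lra].
    congr (emb (_, pole_form _ _ _ _)).
    * rewrite -E1 /PR1; apply: (mod_lin (2*A1) 0 _ _ _ _ Hn (_ : 1*1+0*0 = 1)); [ring|ring].
    * rewrite -E2 /PR2; apply: (mod_lin (2*A2) 0 _ _ _ _ Hn (_ : 1*1+0*0 = 1)); [ring|ring].
    * rewrite -E3 /PR3; apply: (mod_lin (2*A3) 0 _ _ _ _ Hn (_ : 1*1+0*0 = 1)); [ring|ring].
  + move=> v /orbit_um [a [b [e [f [m [n [S1 [S2 ->]]]]]]]].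
    rewrite /p0 pole1_nf // FP1 /vec3 /=.
    congr (emb (_, pole_form _ _ _ _)); field; lra.
  + move=> bb Hb; rewrite FP1.
    apply: functional_extensionality; apply: ord3_cases; rewrite /vec3 /=; field; lra.
  + apply: smooth_map_poly => k; rewrite /fP1; solve_poly.
  + apply: smooth_map_poly => -[i|[i j]] /=; [solve_poly|rewrite /pole_form; solve_poly].
- move=> Hz; have [HA1 [HA2 HA3']] := pform_zero Hz.
  have HA3 : A3 = 0 by lra.
  exists (fun _ => fun _ : 'I_0 => 0), (fun _ => emb p0).
  split; [|split; [|split; [|split; [|split]]]].
  + by [].
  + move=> ? _; exists (um 1 0 0 0 1 0); split; first by apply: um_U2; lra.
    rewrite /p0 pole1_nf; [|lra|lra].
    rewrite HA1 HA2 HA3 /PR1 /PR2 /PR3; congr (emb (_, pole_form _ _ _ _)); ring.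
  + move=> v /orbit_um [a [b [e [f [m [n [S1 [S2 ->]]]]]]]].
    rewrite /p0 pole1_nf // HA1 HA2 HA3 /PR1 /PR2 /PR3; congr (emb (_, pole_form _ _ _ _)); ring.
  + move=> bb _; apply: functional_extensionality => -[i Hi]; by [].
  + apply: smooth_map_poly => k; exact: poly_c.
  + apply: smooth_map_poly => k; exact: poly_c.
Qed.

Definition fM (r : R) (v : Ix -> R) (k : 'I_2) : R :=
  if nat_of_ord k == 0%N then / r * v (inr (o5_0, o5_2)) else - / r * v (inr (o5_0, o5_3)).

Lemma FM r B1 B2 B3 : fM r (emb (pole (-1), pole_form (-1) B1 B2 B3)) = vec2 (/r*B2) (/r*B3).
Proof.
apply: functional_extensionality; apply: ord2_cases; rewrite /fM /vec2 /=;
rewrite /pole_form /Omega1 /Omega2 /Omega3 /pf1 /pf2 /pf3 /pf4 /msub /wedge /mk5 /=; ring.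
Qed.

Lemma polem1_case A1 A2 A3 :
  let p0 : bpoint := (pole (-1), pole_form (-1) A1 A2 A3) in
  ((A2 <> 0 \/ A3 <> 0) -> diffeomorphic (orbit p0) (sphere 1%nat)) /\
  ((A2 = 0 /\ A3 = 0) -> diffeomorphic (orbit p0) point_set).
Proof.
move=> p0; split.
- move=> Hnz.
  have HA : A2*A2+A3*A3 <> 0 by case: Hnz => H; nra.
  pose r := sqrt (A2*A2+A3*A3).
  have Hr : r * r = A2*A2+A3*A3 by apply: sqrt_sqrt; nra.
  have Hr0 : 0 < r by apply: sqrt_lt_R0; nra.
  exists (fM r), (fun t => emb (pole (-1), pole_form (-1) A1 (r * t d0) (r * t d1))).
  split; [|split; [|split; [|split; [|split]]]].
  + move=> v /orbit_um [a [b [e [f [m [n [S1 [S2 ->]]]]]]]].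
    rewrite /p0 polem1_nf // FM /sphere rsum2 /vec2 /=.
    rewrite (_ : /r*(m*A2+n*A3)*(/r*(m*A2+n*A3)) + /r*(m*A3-n*A2)*(/r*(m*A3-n*A2))
       = (m*m+n*n)*(A2*A2+A3*A3) / (r*r)); last by field; lra.
    rewrite S2 Hr; field; exact HA.
  + move=> t Ht; rewrite /sphere rsum2 in Ht.
    pose m' := (A2 * t d0 + A3 * t d1) / r. pose n' := (A3 * t d0 - A2 * t d1) / r.
    have S2 : m'*m'+n'*n' = 1.
      rewrite /m' /n' (_ : ((A2 * t d0 + A3 * t d1) / r) * ((A2 * t d0 + A3 * t d1) / r) +
         ((A3 * t d0 - A2 * t d1) / r) * ((A3 * t d0 - A2 * t d1) / r) =
         (t d0 * t d0 + t d1 * t d1) * (A2*A2+A3*A3) / (r*r)); last by field; lra.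
      rewrite Ht Hr; field; exact HA.
    exists (um 1 0 0 0 m' n'); split; first by apply: um_U2; lra.
    rewrite /p0 polem1_nf //; last lra.
    congr (emb (_, pole_form _ _ _ _)).
    * rewrite /m' /n' (_ : (A2 * t d0 + A3 * t d1) / r * A2 + (A3 * t d0 - A2 * t d1) / r * A3
        = (A2*A2+A3*A3) * t d0 / r); last by field; lra.
      rewrite -Hr; field; lra.
    * rewrite /m' /n' (_ : (A2 * t d0 + A3 * t d1) / r * A3 - (A3 * t d0 - A2 * t d1) / r * A2
        = (A2*A2+A3*A3) * t d1 / r); last by field; lra.
      rewrite -Hr; field; lra.
  + move=> v /orbit_um [a [b [e [f [m [n [S1 [S2 ->]]]]]]]].
    rewrite /p0 polem1_nf // FM /vec2 /=.
    congr (emb (_, pole_form _ _ _ _)); field; lra.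
  + move=> t Ht; rewrite FM.
    apply: functional_extensionality; apply: ord2_cases; rewrite /vec2 /=; field; lra.
  + apply: smooth_map_poly => k; rewrite /fM; case: (_ == _); solve_poly.
  + apply: smooth_map_poly => -[i|[i j]] /=; [solve_poly|rewrite /pole_form; solve_poly].
- move=> [HA2 HA3].
  exists (fun _ => fun _ : 'I_0 => 0), (fun _ => emb p0).
  split; [|split; [|split; [|split; [|split]]]].
  + by [].
  + move=> ? _; exists (um 1 0 0 0 1 0); split; first by apply: um_U2; lra.
    rewrite /p0 polem1_nf; [|lra|lra].
    rewrite HA2 HA3; congr (emb (_, pole_form _ _ _ _)); ring.
  + move=> v /orbit_um [a [b [e [f [m [n [S1 [S2 ->]]]]]]]].
    rewrite /p0 polem1_nf // HA2 HA3; congr (emb (_, pole_form _ _ _ _)); ring.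
  + move=> bb _; apply: functional_extensionality => -[i Hi]; by [].
  + apply: smooth_map_poly => k; exact: poly_c.
  + apply: smooth_map_poly => k; exact: poly_c.
Qed.


Theorem lemma4p5 :
  (* every point is mapped into the fiber over some t(x1,0,0,0,x5), x1 >= 0 *)
  (forall p : bpoint, in_Lambda2m p ->
     exists u, U2 u /\ exists x1 x5, 0 <= x1 /\ (act (liftU2 u) p).1 = mk5 x1 0 0 0 x5)
  /\
  (* x5 <> +-1 *)
  (forall x1 x5 a1 a2 a3 : R, 0 <= x1 -> x1 * x1 + x5 * x5 = 1 -> x5 <> 1 -> x5 <> -1 ->
     let x := mk5 x1 0 0 0 x5 in
     let p0 : bpoint := (x, fiber_form x a1 a2 a3) in
     ((a1 <> 0 \/ a2 <> 0) -> diffeomorphic (orbit p0) U2_set) /\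
     ((a1 = 0 /\ a2 = 0) -> diffeomorphic (orbit p0) (sphere 3%nat)))
  /\
  (* x5 = 1 *)
  (forall A1 A2 A3 : R,
     let p0 : bpoint := (pole 1, pole_form 1 A1 A2 A3) in
     (~ (forall i j, p0.2 i j = 0) -> diffeomorphic (orbit p0) (sphere 2%nat)) /\
     ((forall i j, p0.2 i j = 0) -> diffeomorphic (orbit p0) point_set))
  /\
  (* x5 = -1 *)
  (forall A1 A2 A3 : R,
     let p0 : bpoint := (pole (-1), pole_form (-1) A1 A2 A3) in
     ((A2 <> 0 \/ A3 <> 0) -> diffeomorphic (orbit p0) (sphere 1%nat)) /\
     ((A2 = 0 /\ A3 = 0) -> diffeomorphic (orbit p0) point_set)).
Proof.
split; first exact: part1.
split.
  move=> x1 x5 a1 a2 a3 H0 H1 Hn1 Hn2 x p0.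
  have Hx := x1_nz H0 H1 Hn1 Hn2.
  split; [apply: fib_U2 | apply: fib_S3]; assumption.
split.
  move=> A1 A2 A3; exact: pole1_case.
move=> A1 A2 A3; exact: polem1_case.
Qed.
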